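(* Let $T\in\mathcal{L}(\mathcal{H})$ be a nonzero operator with closed range. The following are equivalent: (1) $T$ is hypo-EP; (2) $T^\dagger=(T^\dagger)^2T$; (3) $T^\dagger T=(T^\dagger)^nT^n$ for every $n\ge1$; (4) there is a real number $c\ge0$ such that $\|T^*x\|\le c\|Tx\|$ for all $x\in\mathcal{H}$.
   Context: $\mathcal{H}$ is a Hilbert space, $\mathcal{L}(\mathcal{H})$ the bounded operators on it. For $T$ with closed range, $T^\dagger$ is its Moore–Penrose inverse (unique solution of $TT^\dagger T=T$, $T^\dagger TT^\dagger=T^\dagger$, $(T^\dagger T)^*=T^\dagger T$, $(TT^\dagger)^*=TT^\dagger$). $T$ is hypo-EP if it has closed range and $T^\dagger T-TT^\dagger\ge0$, equivalently $R(T)\subset R(T^* )$, where $R(\cdot)$ denotes range. *)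

(* Defs.v *)
From HB Require Import structures.
From mathcomp Require Import all_boot all_order all_algebra.
From mathcomp Require Import reals.
From mathcomp.real_closed Require Import complex.
Set Implicit Arguments. Unset Strict Implicit. Unset Printing Implicit Defensive.
Import Order.TTheory GRing.Theory Num.Theory.
Local Open Scope ring_scope.

Section Hilbert.
Variables (R : realType) (V : lmodType R[i]).

Record hilbert := Hilbert {
  ip : V -> V -> R[i];
  ip_linl : forall (a : R[i]) (x y z : V), ip (a *: x + y) z = a * ip x z + ip y z;
  ip_conjsym : forall x y : V, ip y x = Num.conj (ip x y);
  ip_ge0 : forall x : V, 0 <= ip x x;
  ip_def : forall x : V, ip x x = 0 -> x = 0;
  ip_complete : forall u : nat -> V,
    (forall e : R, 0 < e -> exists N : nat, forall m n : nat, (N <= m)%N -> (N <= n)%N ->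
       Num.sqrt (complex.Re (ip (u m - u n) (u m - u n))) < e) ->
    exists l : V, forall e : R, 0 < e -> exists N : nat, forall n : nat, (N <= n)%N ->
       Num.sqrt (complex.Re (ip (u n - l) (u n - l))) < e
}.

Variable H : hilbert.

Definition hnorm (x : V) : R := Num.sqrt (complex.Re (ip H x x)).

Definition hconverges (u : nat -> V) (l : V) : Prop :=
  forall e : R, 0 < e -> exists N : nat, forall n : nat, (N <= n)%N -> hnorm (u n - l) < e.

(* closed subsets (sequentially closed = closed in a metric space) *)
Definition hclosed (P : V -> Prop) : Prop :=
  forall (u : nat -> V) (l : V), (forall n, P (u n)) -> hconverges u l -> P l.

Definition range (T : V -> V) : V -> Prop := fun y => exists x, T x = y.

Definition closed_range (T : V -> V) : Prop := hclosed (range T).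

Definition bounded_op (T : V -> V) : Prop :=
  (forall (a : R[i]) (x y : V), T (a *: x + y) = a *: T x + T y) /\
  exists M : R, forall x : V, hnorm (T x) <= M * hnorm x.

Definition is_adjoint (T A : V -> V) : Prop :=
  bounded_op A /\ forall x y : V, ip H (T x) y = ip H x (A y).

Definition self_adjoint (T : V -> V) : Prop :=
  forall x y : V, ip H (T x) y = ip H x (T y).

Definition is_MP_inverse (T S : V -> V) : Prop :=
  [/\ bounded_op S,
      forall x, T (S (T x)) = T x,
      forall x, S (T (S x)) = S x,
      self_adjoint (S \o T) &
      self_adjoint (T \o S)].

Definition positive_op (A : V -> V) : Prop := forall x : V, 0 <= ip H (A x) x.

Definition hypoEP (T : V -> V) : Prop :=
  closed_range T /\
  exists S : V -> V, is_MP_inverse T S /\ positive_op (fun x => S (T x) - T (S x)).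

End Hilbert.

(* Main.v *)
Require Import Defs.
From HB Require Import structures.
From mathcomp Require Import all_boot all_order all_algebra.
From mathcomp Require Import reals.
From mathcomp.real_closed Require Import complex.
Import Order.TTheory GRing.Theory Num.Theory.
Local Open Scope ring_scope.


Lemma ipDl {R : realType} {V : lmodType R[i]} (H : hilbert V) x y z :
  ip H (x + y) z = ip H x z + ip H y z.
Proof. by have := ip_linl H 1 x y z; rewrite scale1r mul1r. Qed.

Lemma ip0l {R : realType} {V : lmodType R[i]} (H : hilbert V) z :
  ip H 0 z = 0.
Proof.
have := ipDl H 0 0 z; rewrite addr0 => h.
by apply: (@addrI _ (ip H 0 z)); rewrite addr0 -h.
Qed.

Lemma ipNl {R : realType} {V : lmodType R[i]} (H : hilbert V) x z :
  ip H (- x) z = - ip H x z.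
Proof. by have := ip_linl H (-1) x 0 z; rewrite addr0 ip0l addr0 scaleN1r mulN1r. Qed.

Lemma ipBl {R : realType} {V : lmodType R[i]} (H : hilbert V) x y z :
  ip H (x - y) z = ip H x z - ip H y z.
Proof. by rewrite ipDl ipNl. Qed.

Lemma ipDr {R : realType} {V : lmodType R[i]} (H : hilbert V) x y z :
  ip H z (x + y) = ip H z x + ip H z y.
Proof. by rewrite (ip_conjsym H (x+y) z) (ip_conjsym H x z) (ip_conjsym H y z) ipDl rmorphD. Qed.

Lemma ip0r {R : realType} {V : lmodType R[i]} (H : hilbert V) z :
  ip H z 0 = 0.
Proof. by rewrite ip_conjsym ip0l rmorph0. Qed.

Lemma ipBr {R : realType} {V : lmodType R[i]} (H : hilbert V) x y z :
  ip H z (x - y) = ip H z x - ip H z y.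
Proof. by rewrite (ip_conjsym H (x-y) z) (ip_conjsym H x z) (ip_conjsym H y z) ipBl rmorphB. Qed.

Lemma ip_ext {R : realType} {V : lmodType R[i]} (H : hilbert V) a b :
  (forall y, ip H a y = ip H b y) -> a = b.
Proof.
move=> h; have : a - b = 0 by apply: (@ip_def _ _ H); rewrite ipBl h subrr.
by move/eqP; rewrite subr_eq0 => /eqP.
Qed.

Lemma linB {R : realType} {V : lmodType R[i]} {f : V -> V} :
  (forall a x y, f (a *: x + y) = a *: f x + f y) -> forall x y, f (x - y) = f x - f y.
Proof. by move=> lf x y; rewrite addrC -scaleN1r lf scaleN1r addrC. Qed.

Lemma lin0 {R : realType} {V : lmodType R[i]} {f : V -> V} :
  (forall a x y, f (a *: x + y) = a *: f x + f y) -> f 0 = 0.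
Proof. by move=> lf; have := linB lf 0 0; rewrite !subrr. Qed.

Lemma hnorm_le0 {R : realType} {V : lmodType R[i]} (H : hilbert V) x :
  hnorm H x <= 0 -> x = 0.
Proof.
rewrite /hnorm => h.
have h0 : Num.sqrt (complex.Re (ip H x x)) = 0.
  by apply/eqP; rewrite eq_le h sqrtr_ge0.
move/eqP: h0; rewrite sqrtr_eq0 => hr.
have := ip_ge0 H x; rewrite lecE /= => /andP[/eqP hi hr'].
apply: (@ip_def _ _ H); move: hi hr hr'; case: (ip H x x) => a b /= -> ha hb.
by have -> : a = 0 by apply/eqP; rewrite eq_le ha hb.
Qed.

Lemma hnorm0 {R : realType} {V : lmodType R[i]} (H : hilbert V) :
  hnorm H 0 = 0.
Proof. by rewrite /hnorm ip0l /= sqrtr0. Qed.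

Lemma adj_swap {R : realType} {V : lmodType R[i]} (H : hilbert V) {A B : V -> V} :
  self_adjoint H A -> self_adjoint H B -> (forall x, B (A x) = A x) ->
  forall x, A (B x) = A x.
Proof.
move=> sA sB h x; apply: (ip_ext H) => y.
by rewrite sA sB h sA.
Qed.

Lemma adj_swap2 {R : realType} {V : lmodType R[i]} (H : hilbert V) {A B : V -> V} :
  self_adjoint H A -> self_adjoint H B -> (forall x, A (B x) = A x) ->
  forall x, B (A x) = A x.
Proof.
move=> sA sB h x; apply: (ip_ext H) => y.
by rewrite sB sA h -sA.
Qed.

Definition linf {R : realType} {V : lmodType R[i]} (f : V -> V) :=
  forall a x y, f (a *: x + y) = a *: f x + f y.

Lemma mp_unique {R : realType} {V : lmodType R[i]} (H : hilbert V) {T S1 S2 : V -> V} :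
  is_MP_inverse H T S1 -> is_MP_inverse H T S2 -> forall x, S1 x = S2 x.
Proof.
case=> _ a1 b1 sP1 sQ1; case=> _ a2 b2 sP2 sQ2.
have hP : forall x, S1 (T x) = S2 (T x).
  move=> x.
  have h1 : forall x, (S1 \o T) ((S2 \o T) x) = (S1 \o T) x by move=> y /=; rewrite a2.
  have := adj_swap2 H sP1 sP2 h1 x => /= <-.
  by rewrite a1.
have hQ : forall x, T (S1 x) = T (S2 x).
  move=> x.
  have h1 : forall x, (T \o S1) ((T \o S2) x) = (T \o S2) x by move=> y /=; rewrite a1.
  have := adj_swap H sQ2 sQ1 h1 x => /= <-.
  by rewrite a2.
by move=> x; rewrite -b1 hP hQ b2.
Qed.


Lemma keyL {R : realType} {V : lmodType R[i]} (H : hilbert V) {T S : V -> V} :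
  linf T -> linf S -> is_MP_inverse H T S -> forall z,
  T (S z) = z -> T (S (z - S (T z))) = 0 -> S (T z) = z.
Proof.
move=> lT lS [_ a b sP sQ] z hz hw.
have sP' : forall x y, ip H (S (T x)) y = ip H x (S (T y)) := sP.
have sQ' : forall x y, ip H (T (S x)) y = ip H x (T (S y)) := sQ.
set w := z - S (T z).
have Pw : S (T w) = 0 by rewrite /w (linB lT) a subrr (lin0 lS).
have e1 : ip H w z = 0 by rewrite -hz -sQ' hw ip0l.
have e2 : ip H w (S (T z)) = 0 by rewrite -sP' Pw ip0l.
have : ip H w w = 0 by rewrite {2}/w ipBr e1 e2 subrr.
move/(@ip_def _ _ H)/eqP; rewrite /w subr_eq0 => /eqP e.
by rewrite -e.
Qed.

Lemma hypo_C {R : realType} {V : lmodType R[i]} (H : hilbert V) {T S : V -> V} :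
  linf T -> linf S -> is_MP_inverse H T S ->
  (forall x, 0 <= ip H (S (T x) - T (S x)) x) -> forall y, S (T (T y)) = T y.
Proof.
move=> lT lS mp pos y; have mp' := mp; case: mp' => _ a b sP sQ.
have sQ' : forall x y, ip H (T (S x)) y = ip H x (T (S y)) := sQ.
apply: (keyL H lT lS mp); first by rewrite a.
set w := T y - S (T (T y)).
have Pw : S (T w) = 0 by rewrite /w (linB lT) a subrr (lin0 lS).
set u := T (S w).
have e : ip H u w = ip H u u by rewrite /u -{1}b sQ'.
have h1 := pos w; rewrite Pw sub0r ipNl e oppr_ge0 in h1.
have h2 := ip_ge0 H u.
by apply: (@ip_def _ _ H); apply/eqP; rewrite eq_le h1 h2.
Qed.

Lemma C_pos {R : realType} {V : lmodType R[i]} (H : hilbert V) {T S : V -> V} :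
  linf T -> linf S -> is_MP_inverse H T S ->
  (forall y, S (T (T y)) = T y) -> forall x, 0 <= ip H (S (T x) - T (S x)) x.
Proof.
move=> lT lS mp hC x; have mp' := mp; case: mp' => _ a b sP sQ.
have sP' : forall x y, ip H (S (T x)) y = ip H x (S (T y)) := sP.
have sQ' : forall x y, ip H (T (S x)) y = ip H x (T (S y)) := sQ.
have PQ : forall x, (S \o T) ((T \o S) x) = (T \o S) x by move=> z /=; rewrite hC.
have QP := adj_swap H sQ sP PQ; rewrite /= in QP.
set u := S (T x) - T (S x).
have Qu : T (S u) = 0 by rewrite /u (linB lS) (linB lT) QP b subrr.
have Pu : S (T u) = u by rewrite /u (linB lT) (linB lS) a hC.
have e : ip H u x = ip H u u.
  rewrite {3}/u ipBr -(sQ' u x) Qu ip0l subr0.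
  by rewrite -{1}Pu sP'.
by rewrite e ip_ge0.
Qed.

Lemma C_2 {R : realType} {V : lmodType R[i]} (H : hilbert V) {T S : V -> V} :
  is_MP_inverse H T S ->
  (forall y, S (T (T y)) = T y) -> forall x, S x = S (S (T x)).
Proof.
move=> mp hC x; have mp' := mp; case: mp' => _ a b sP sQ.
have PQ : forall x, (S \o T) ((T \o S) x) = (T \o S) x by move=> z /=; rewrite hC.
have QP := adj_swap H sQ sP PQ; rewrite /= in QP.
by rewrite -[LHS]b -QP b.
Qed.

Lemma two_C {R : realType} {V : lmodType R[i]} (H : hilbert V) {T S : V -> V} :
  is_MP_inverse H T S ->
  (forall x, S x = S (S (T x))) -> forall y, S (T (T y)) = T y.
Proof.
move=> mp h2 y; have mp' := mp; case: mp' => _ a b sP sQ.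
have QP : forall x, (T \o S) ((S \o T) x) = (T \o S) x by move=> z /=; rewrite -h2.
have PQ := adj_swap2 H sQ sP QP; rewrite /= in PQ.
by have := PQ (T y); rewrite !a.
Qed.

Lemma two_three {R : realType} {V : lmodType R[i]} {T S : V -> V} :
  (forall x, S x = S (S (T x))) ->
  forall m x, S (T x) = iter m.+1 S (iter m.+1 T x).
Proof.
move=> h2; elim=> [|m IH] x; first by [].
rewrite IH.
have -> : iter m.+2 S (iter m.+2 T x) = iter m S (S (S (T (iter m.+1 T x)))).
  by rewrite [iter m.+2 S _]iterSr [iter m.+1 S _]iterSr.
by rewrite -h2 -iterSr.
Qed.

Lemma three_C {R : realType} {V : lmodType R[i]} (H : hilbert V) {T S : V -> V} :
  linf T -> linf S -> is_MP_inverse H T S ->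
  (forall x, S (T x) = S (S (T (T x)))) -> forall y, S (T (T y)) = T y.
Proof.
move=> lT lS mp h3 y; have mp' := mp; case: mp' => _ a b sP sQ.
apply: (keyL H lT lS mp); first by rewrite a.
by rewrite (linB lS) -h3 subrr (lin0 lT).
Qed.

Lemma C_four {R : realType} {V : lmodType R[i]} (H : hilbert V) {T S Ts : V -> V} :
  is_MP_inverse H T S -> is_adjoint H T Ts ->
  (forall y, S (T (T y)) = T y) ->
  exists c : R, 0 <= c /\ forall x, hnorm H (Ts x) <= c * hnorm H (T x).
Proof.
move=> mp [[lA [M1 hM1]] adj] hC; have mp' := mp; case: mp' => [[lS [M2 hM2]]] a b sP sQ.
have sP' : forall x y, ip H (S (T x)) y = ip H x (S (T y)) := sP.
have eT : forall x, Ts x = Ts (S (T x)).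
  move=> x; apply: (ip_ext H) => y.
  rewrite (ip_conjsym H y (Ts x)) (ip_conjsym H y (Ts (S (T x)))) -!adj.
  by rewrite -sP' hC.
exists (`|M1| * `|M2|); split; first by rewrite mulr_ge0.
move=> x; rewrite eT.
apply: (le_trans (hM1 _)).
have n0 : forall v, 0 <= hnorm H v by move=> v; exact: sqrtr_ge0.
apply: (le_trans (ler_wpM2r (n0 _) (ler_norm M1))).
rewrite -mulrA; apply: ler_wpM2l; first exact: normr_ge0.
apply: (le_trans (hM2 _)).
exact: (ler_wpM2r (n0 _) (ler_norm M2)).
Qed.

Lemma four_C {R : realType} {V : lmodType R[i]} (H : hilbert V) {T S Ts : V -> V} :
  linf T -> is_MP_inverse H T S -> is_adjoint H T Ts ->
  (exists c : R, 0 <= c /\ forall x, hnorm H (Ts x) <= c * hnorm H (T x)) ->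
  forall y, S (T (T y)) = T y.
Proof.
move=> lT mp [[lA _] adj] [c [c0 hc]] y; have mp' := mp; case: mp' => _ a b sP sQ.
have sP' : forall x y, ip H (S (T x)) y = ip H x (S (T y)) := sP.
have eT : forall x, Ts x = Ts (S (T x)).
  move=> x.
  have Tw : T (x - S (T x)) = 0 by rewrite (linB lT) a subrr.
  have : Ts (x - S (T x)) = 0.
    apply: (hnorm_le0 H); apply: (le_trans (hc _)).
    by rewrite Tw hnorm0 mulr0.
  by rewrite (linB lA) => /eqP; rewrite subr_eq0 => /eqP.
apply: (ip_ext H) => x.
by rewrite sP' adj -(eT x) adj.
Qed.

Lemma hypo_iff {R : realType} {V : lmodType R[i]} (H : hilbert V) {T S : V -> V} :
  linf T -> closed_range H T -> is_MP_inverse H T S ->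
  (hypoEP H T <-> forall y, S (T (T y)) = T y).
Proof.
move=> lT cl mp; have mp' := mp; case: mp' => [[lS _]] _ _ _ _.
split.
  case=> _ [S' [mpS' pos]].
  have eq := mp_unique H mpS' mp.
  apply: (hypo_C H lT lS mp) => x.
  by have := pos x; rewrite /= !eq.
move=> hC; split => //; exists S; split => //.
by move=> x; exact: (C_pos H lT lS mp hC).
Qed.

Theorem mainTheorem12 (R : realType) (V : lmodType R[i]) (H : hilbert V)
  (T Tdag Tstar : V -> V) :
  bounded_op H T -> (exists x : V, T x != 0) -> closed_range H T ->
  is_MP_inverse H T Tdag -> is_adjoint H T Tstar ->
  [/\ (hypoEP H T <-> (forall x, Tdag x = Tdag (Tdag (T x)))),
      (hypoEP H T <-> (forall n : nat, (1 <= n)%N ->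
                          forall x, Tdag (T x) = iter n Tdag (iter n T x))) &
      (hypoEP H T <-> (exists c : R, 0 <= c /\
                          forall x, hnorm H (Tstar x) <= c * hnorm H (T x)))].
Proof.
move=> [lT _] _ cl mp adj.
have mp' := mp; case: mp' => [[lS _]] _ _ _ _.
have hI := hypo_iff H lT cl mp.
split.
- rewrite hI; split; [exact (C_2 H mp) | exact (two_C H mp)].
- rewrite hI; split.
    move=> hC; case=> // m _; exact: two_three (C_2 H mp hC) m.
  move=> h3; apply: (three_C H lT lS mp) => x.
  exact: (h3 2%N isT x).
- rewrite hI; split; [exact (C_four H mp adj) | exact (four_C H lT mp adj)].
Qed.
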